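(* Let $P$ be an arbitrary set of atomic propositions and let $\mathcal{C}: 2^P \to 2^P$ be a C-logics over $P$. Let $\mathcal{L}$ be the closure of $P$ under a binary connective $\wedge$ and a unary connective $\neg$ (the set of formulas built from $P$ with $\wedge, \neg$). Then there exists a C-logics $\mathcal{C}': 2^{\mathcal{L}} \to 2^{\mathcal{L}}$ that satisfies $\wedge$-R, $\neg$-R1 and $\neg$-R2, such that $\mathcal{C}(A) = P \cap \mathcal{C}'(A)$ for every $A \subseteq P$.
   Context: A C-logics on a set $S$ is a map $\mathcal{D}: 2^S\to 2^S$ satisfying Inclusion ($A \subseteq \mathcal{D}(A)$) and Cumulativity ($A\subseteq B\subseteq \mathcal{D}(A) \Rightarrow \mathcal{D}(A)=\mathcal{D}(B)$) for all $A,B\subseteq S$. For $\mathcal{C}'$ on $\mathcal{L}$, writing $\mathcal{C}'(A, a_1,\dots,a_k)$ for $\mathcal{C}'(A\cup\{a_1,\dots,a_k\})$: $\wedge$-R: $\mathcal{C}'(A, a\wedge b) = \mathcal{C}'(A,a,b)$; $\neg$-R1: $\mathcal{C}'(A,a,\neg a) = \mathcal{L}$; $\neg$-R2: if $\mathcal{C}'(A,\neg a)=\mathcal{L}$ then $a\in\mathcal{C}'(A)$; for all $A\subseteq\mathcal{L}$, $a,b\in\mathcal{L}$. *)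

(* Defs.v *)
Definition subset {S : Type} (A B : S -> Prop) : Prop := forall x, A x -> B x.
Definition seteq {S : Type} (A B : S -> Prop) : Prop := forall x, A x <-> B x.

Definition is_C_logics {S : Type} (D : (S -> Prop) -> (S -> Prop)) : Prop :=
  (forall A, subset A (D A)) /\
  (forall A B, subset A B -> subset B (D A) -> seteq (D A) (D B)).

Inductive form (P : Type) : Type :=
| Atom : P -> form P
| And : form P -> form P -> form P
| Neg : form P -> form P.
Arguments Atom {P} _.
Arguments And {P} _ _.
Arguments Neg {P} _.

Definition add {S : Type} (A : S -> Prop) (a : S) : S -> Prop :=
  fun x => A x \/ x = a.

Definition fullset {S : Type} : S -> Prop := fun _ => True.

Definition and_R {P : Type} (C' : (form P -> Prop) -> (form P -> Prop)) : Prop :=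
  forall A a b, seteq (C' (add A (And a b))) (C' (add (add A a) b)).

Definition neg_R1 {P : Type} (C' : (form P -> Prop) -> (form P -> Prop)) : Prop :=
  forall A a, seteq (C' (add (add A a) (Neg a))) fullset.

Definition neg_R2 {P : Type} (C' : (form P -> Prop) -> (form P -> Prop)) : Prop :=
  forall A a, seteq (C' (add A (Neg a))) fullset -> C' A a.

Definition embed {P : Type} (A : P -> Prop) : form P -> Prop :=
  fun f => exists p, A p /\ f = Atom p.

(* Main.v *)
Require Import Defs.
From Stdlib Require Import Classical.

Fixpoint sat {P : Type} (v : P -> Prop) (f : form P) : Prop :=
  match f with
  | Atom p => v p
  | And a b => sat v a /\ sat v b
  | Neg a => ~ sat v a
  end.

Lemma sat_ext {P : Type} (v w : P -> Prop) : seteq v w -> forall f, sat v f <-> sat w f.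
Proof.
  intros H f; induction f; simpl; firstorder.
Qed.

Definition Mod {P : Type} (A : form P -> Prop) (v : P -> Prop) : Prop :=
  forall f, A f -> sat v f.

Definition Iat {P : Type} (A : form P -> Prop) : P -> Prop :=
  fun p => forall w, Mod A w -> w p.

Definition Cp {P : Type} (C : (P -> Prop) -> (P -> Prop)) (A : form P -> Prop) : form P -> Prop :=
  fun f => (Mod A (C (Iat A)) /\ sat (C (Iat A)) f) \/
           (~ Mod A (C (Iat A)) /\ forall v, Mod A v -> sat v f).

Lemma C_ext {P : Type} (C : (P -> Prop) -> (P -> Prop)) : is_C_logics C ->
  forall a b, seteq a b -> seteq (C a) (C b).
Proof.
  intros [Hi Hc] a b H. apply Hc.
  - intros x Hx; apply H; auto.
  - intros x Hx; apply Hi; apply H; auto.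
Qed.

Lemma Cp_mod {P : Type} (C : (P -> Prop) -> (P -> Prop)) : is_C_logics C ->
  forall A B : form P -> Prop, (forall v, Mod A v <-> Mod B v) -> seteq (Cp C A) (Cp C B).
Proof.
  intros HC A B H.
  assert (HI : seteq (Iat A) (Iat B)).
  { intros p; unfold Iat; split; intros K w Hw; apply K, H; auto. }
  pose proof (C_ext C HC _ _ HI) as HE.
  assert (HM : Mod A (C (Iat A)) <-> Mod B (C (Iat B))).
  { rewrite H. unfold Mod; split; intros K f Hf; specialize (K f Hf);
    [apply (sat_ext _ _ HE) | apply (sat_ext _ _ HE)]; auto. }
  intros f; unfold Cp. rewrite HM, (sat_ext _ _ HE f).
  split; (intros [[K1 K2]|[K1 K2]]; [left; auto| right; split; auto; intros v Hv; apply K2, H; auto]).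
Qed.

Theorem theorem6 (P : Type) (C : (P -> Prop) -> (P -> Prop)) :
  is_C_logics C ->
  exists C' : (form P -> Prop) -> (form P -> Prop),
    is_C_logics C' /\ and_R C' /\ neg_R1 C' /\ neg_R2 C' /\
    (forall A : P -> Prop, seteq (C A) (fun p => C' (embed A) (Atom p))).
Proof.
  intros HC. exists (Cp C). split; [|split; [|split; [|split]]].
  - split.
    + intros A f Hf. unfold Cp. destruct (classic (Mod A (C (Iat A)))) as [K|K].
      * left; auto.
      * right; split; auto.
    + intros A B HAB HB.
      destruct (classic (Mod A (C (Iat A)))) as [K|K].
      * assert (MB : Mod B (C (Iat A))).
        { intros f Hf. destruct (HB f Hf) as [[_ H]|[H _]]; [auto|contradiction]. }
        assert (HI : seteq (C (Iat A)) (C (Iat B))).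
        { destruct HC as [Hi Hc]. apply Hc.
          - intros p Hp w Hw. apply Hp. intros f Hf; apply Hw, HAB; auto.
          - intros p Hp. apply Hp. auto. }
        assert (MB' : Mod B (C (Iat B))).
        { intros f Hf. apply (sat_ext _ _ HI); auto. }
        intros f; unfold Cp. split.
        -- intros [[_ H]|[H _]]; [|contradiction]. left; split; auto.
           apply (sat_ext _ _ HI); auto.
        -- intros [[_ H]|[H _]]; [|contradiction]. left; split; auto.
           apply (sat_ext _ _ HI); auto.
      * apply Cp_mod; auto. intros v; split.
        -- intros Hv f Hf. destruct (HB f Hf) as [[H _]|[_ H]]; [contradiction|auto].
        -- intros Hv f Hf. apply Hv, HAB; auto.
  - intros A a b. apply Cp_mod; auto. intros v; unfold Mod, add; simpl; split.
    + intros H f [[Hf|Hf]|Hf]; subst.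
      * apply H; auto.
      * apply (H (And a b)); auto.
      * apply (H (And a b)); auto.
    + intros H f [Hf|Hf]; subst; simpl; auto.
  - intros A a f. split; [intros; exact I|]. intros _.
    unfold Cp. right. split.
    + intros H. pose proof (H a) as H1. pose proof (H (Neg a)) as H2.
      unfold add in *; simpl in *. apply H2; auto.
    + intros v H. exfalso. pose proof (H a) as H1. pose proof (H (Neg a)) as H2.
      unfold add in *; simpl in *. apply H2; auto.
  - intros A a H.
    assert (E : forall v, Mod (add A (Neg a)) v -> False).
    { intros v Hv. destruct (H a) as [_ Ha]. destruct (H (Neg a)) as [_ Hn].
      specialize (Ha I); specialize (Hn I).
      destruct Ha as [[M1 S1]|[_ S1]]; destruct Hn as [[M2 S2]|[_ S2]].
      - simpl in S2; auto.
      - simpl in S2; apply (S2 _ M1); auto.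
      - simpl in S2; apply S2, (S1 _ M2).
      - apply (S2 _ Hv), (S1 _ Hv). }
    assert (Ea : forall v, Mod A v -> sat v a).
    { intros v Hv. apply NNPP. intros Hn. apply (E v).
      intros f [Hf|Hf]; subst; simpl; auto. }
    unfold Cp. destruct (classic (Mod A (C (Iat A)))) as [K|K].
    + left; auto.
    + right; auto.
  - intros A0.
    assert (HI : seteq (Iat (embed A0)) A0).
    { intros p; unfold Iat; split.
      - intros K. apply (K A0). intros f [q [Hq ->]]; simpl; auto.
      - intros Hp w Hw. apply (Hw (Atom p)). exists p; auto. }
    pose proof (C_ext C HC _ _ HI) as HE.
    assert (M : Mod (embed A0) (C (Iat (embed A0)))).
    { intros f [q [Hq ->]]; simpl. apply HE. destruct HC as [Hi _]. apply Hi; auto. }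
    intros p; unfold Cp; simpl. split.
    + intros Hp; left; split; auto. apply HE; auto.
    + intros [[_ H]|[H _]]; [apply HE; auto|contradiction].
Qed.
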